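(* Let $(X,d)$ be a compact metric space and $(X,f)$ a flow or semiflow that has the weak reparametrized gluing orbit property and is not minimal. Then there exist $x,y\in X$, $\epsilon>0$ and $T>0$ such that $d(f^t(x),x)\ge\epsilon$ for all $t\ge T$; $d(f^t(y),x)\ge\epsilon$ for all $t\ge T$; $d(f^t(y),y)\ge\epsilon$ for all $t\ge T$; and $d(f^t(x),y)\ge\epsilon$ for all $t\ge 0$.
   Context: A flow (resp. semiflow) on $X$ is a continuous family $\{f^t\}$ of continuous maps $X\to X$ indexed by $t\in\mathbb{R}$ (resp. $t\in[0,\infty)$) with $f^0=\mathrm{id}$ and $f^{t+s}=f^t\circ f^s$. $(X,f)$ is minimal if for every $x\in X$ the forward orbit $\{f^t(x):t\ge 0\}$ is dense in $X$. For $L\ge 1$, an $L$-reparametrization is a strictly increasing continuous function $\gamma:[0,\infty)\to[0,\infty)$ with $\gamma(0)=0$ and $L^{-1}\le \frac{\gamma(t_1)-\gamma(t_2)}{t_1-t_2}\le L$ for all $t_1\ne t_2$ in $[0,\infty)$. An orbit sequence of rank $k$ is a finite sequence $\mathscr{C}=\{(x_j,m_j)\in X\times[0,\infty):j=1,\dots,k\}$. A gap for it is a $(k-1)$-tuple $\mathscr{g}=\{t_j\in[0,\infty):j=1,\dots,k-1\}$. Given a reparametrization $\gamma$ and $\epsilon>0$, $(\mathscr{C},\mathscr{g},\gamma)$ is $\epsilon$-shadowed by $z\in X$ if for every $j=1,\dots,k$ and every $t\in[0,m_j]$ one has $d(f^{\gamma(s_j+t)}(z),f^t(x_j))<\epsilon$,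 where $s_1=0$ and $s_j=\sum_{i=1}^{j-1}(m_i+t_i)$ for $j\ge2$. $(X,f)$ has the weak reparametrized gluing orbit property if for every $\epsilon>0$ there is $M=M(\epsilon)>0$ such that for every orbit sequence $\mathscr{C}$ there exist a gap $\mathscr{g}$ with $\max\mathscr{g}\le M$ and an $M$-reparametrization $\gamma$ such that $(\mathscr{C},\mathscr{g},\gamma)$ is $\epsilon$-shadowed by some point of $X$. *)

(* Defs.v *)
From Stdlib Require Import Reals Lra List.
Open Scope R_scope.

Definition is_metric (X : Type) (d : X -> X -> R) : Prop :=
  (forall x y, 0 <= d x y) /\
  (forall x y, d x y = 0 <-> x = y) /\
  (forall x y, d x y = d y x) /\
  (forall x y z, d x z <= d x y + d y z).

Definition is_open (X : Type) (d : X -> X -> R) (U : X -> Prop) : Prop :=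
  forall x, U x -> exists r, 0 < r /\ forall y, d x y < r -> U y.

Definition compact_space (X : Type) (d : X -> X -> R) : Prop :=
  forall (I : Type) (U : I -> X -> Prop),
    (forall i, is_open X d (U i)) ->
    (forall x, exists i, U i x) ->
    exists l : list I, forall x, exists i, In i l /\ U i x.

(* f t is f^t; only times t >= 0 are used.  A semiflow:
   f^0 = id, f^(t+s) = f^t o f^s, and (t,x) |-> f^t x jointly continuous
   on [0,oo) x X (hence each f^t continuous). *)
Definition is_semiflow (X : Type) (d : X -> X -> R) (f : R -> X -> X) : Prop :=
  (forall x, f 0 x = x) /\
  (forall t s x, 0 <= t -> 0 <= s -> f (t + s) x = f t (f s x)) /\
  (forall t x, 0 <= t -> forall eps, 0 < eps -> exists delta, 0 < delta /\
     forall s y, 0 <= s -> Rabs (s - t) < delta -> d x y < delta ->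
       d (f s y) (f t x) < eps).

Definition minimal (X : Type) (d : X -> X -> R) (f : R -> X -> X) : Prop :=
  forall x y eps, 0 < eps -> exists t, 0 <= t /\ d (f t x) y < eps.

Definition reparam (L : R) (gamma : R -> R) : Prop :=
  1 <= L /\
  gamma 0 = 0 /\
  (forall t, 0 <= t -> 0 <= gamma t) /\
  (forall t1 t2, 0 <= t1 -> t1 < t2 -> gamma t1 < gamma t2) /\
  (forall t, 0 <= t -> forall eps, 0 < eps -> exists delta, 0 < delta /\
     forall s, 0 <= s -> Rabs (s - t) < delta -> Rabs (gamma s - gamma t) < eps) /\
  (forall t1 t2, 0 <= t1 -> 0 <= t2 -> t1 <> t2 ->
     / L <= (gamma t1 - gamma t2) / (t1 - t2) <= L).

(* An orbit sequence of rank k is C : nat -> X * R, used on indices 0..k-1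
   (C j = (x_{j+1}, m_{j+1})); a gap is g : nat -> R on indices 0..k-2.
   start_time C g j = s_{j+1} = sum_{i<j} (m_i + t_i). *)
Fixpoint start_time {X : Type} (C : nat -> X * R) (g : nat -> R) (j : nat) : R :=
  match j with
  | O => 0
  | S j' => start_time C g j' + snd (C j') + g j'
  end.

Definition orbit_seq {X : Type} (k : nat) (C : nat -> X * R) : Prop :=
  forall j, (j < k)%nat -> 0 <= snd (C j).

Definition gap_for (k : nat) (g : nat -> R) : Prop :=
  forall j, (S j < k)%nat -> 0 <= g j.

Definition shadowed (X : Type) (d : X -> X -> R) (f : R -> X -> X)
  (k : nat) (C : nat -> X * R) (g : nat -> R) (gamma : R -> R) (eps : R) (z : X) : Prop :=
  forall j, (j < k)%nat -> forall t, 0 <= t <= snd (C j) ->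
    d (f (gamma (start_time C g j + t)) z) (f t (fst (C j))) < eps.

Definition weak_reparam_gluing (X : Type) (d : X -> X -> R) (f : R -> X -> X) : Prop :=
  forall eps, 0 < eps -> exists M, 0 < M /\
    forall (k : nat) (C : nat -> X * R), (1 <= k)%nat -> orbit_seq k C ->
      exists g : nat -> R, gap_for k g /\ (forall j, (S j < k)%nat -> g j <= M) /\
      exists gamma, reparam M gamma /\ exists z, shadowed X d f k C g gamma eps z.

(* Main.v *)
Require Import Defs.
From Stdlib Require Import Reals Lra Classical List Arith.
Open Scope R_scope.

Lemma lip_cont (h : R -> R) (L : R) : 0 < L ->
  (forall u v, Rabs (h u - h v) <= L * Rabs (u - v)) -> continuity h.
Proof.
  intros HL Hl x0. unfold continuity_pt, continue_in, limit1_in, limit_in.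
  intros eps Heps. exists (eps / L). split.
  - apply Rdiv_lt_0_compat; lra.
  - intros x [_ Hx]. simpl in *. unfold Rdist in *.
    eapply Rle_lt_trans. apply Hl.
    apply Rmult_lt_compat_l with (r:=L) in Hx; [|lra].
    replace (L * (eps / L)) with eps in Hx by (field; lra). lra.
Qed.

Lemma gamma_lip (L : R) (g : R -> R) t1 t2 : reparam L g -> 0 <= t2 -> t2 < t1 ->
  g t1 - g t2 <= L * (t1 - t2) /\ (t1 - t2) / L <= g t1 - g t2.
Proof.
  intros [HL [_ [_ [_ [_ Hs]]]]] H2 H12.
  destruct (Hs t1 t2 ltac:(lra) H2 ltac:(lra)) as [Ha Hb].
  set (r := (g t1 - g t2) / (t1 - t2)) in *.
  assert (E : g t1 - g t2 = r * (t1 - t2)) by (unfold r; field; lra).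
  rewrite E. split.
  - apply Rmult_le_compat_r; lra.
  - unfold Rdiv. rewrite Rmult_comm. apply Rmult_le_compat_r; lra.
Qed.

Lemma Rmax0_lip u v : Rabs (Rmax 0 u - Rmax 0 v) <= Rabs (u - v).
Proof.
  unfold Rmax; destruct (Rle_dec 0 u); destruct (Rle_dec 0 v);
  unfold Rabs; repeat destruct Rcase_abs; lra.
Qed.

Lemma gamma_abs (L : R) (g : R -> R) u v : reparam L g -> 0 <= u -> 0 <= v ->
  Rabs (g u - g v) <= L * Rabs (u - v).
Proof.
  intros Hr Hu Hv. destruct (Rtotal_order u v) as [H|[H|H]].
  - destruct (gamma_lip L g v u Hr Hu H).
    assert (0 < (v - u) / L) by (apply Rdiv_lt_0_compat; destruct Hr; lra).
    rewrite Rabs_minus_sym, (Rabs_minus_sym u v).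
    rewrite !Rabs_right; lra.
  - subst. replace (v - v) with 0 by ring. replace (g v - g v) with 0 by ring.
    rewrite Rabs_R0; lra.
  - destruct (gamma_lip L g u v Hr Hv H).
    assert (0 < (u - v) / L) by (apply Rdiv_lt_0_compat; destruct Hr; lra).
    rewrite !Rabs_right; lra.
Qed.

Lemma gamma_inv (L : R) (g : R -> R) a b t : reparam L g -> 0 <= a -> a <= b ->
  g a <= t <= g b -> exists s, a <= s <= b /\ g s = t.
Proof.
  intros Hr Ha Hab Ht.
  assert (HL : 0 < L) by (destruct Hr; lra).
  set (h := fun u => g (Rmax 0 u) - t).
  assert (Hc : continuity h).
  { apply (lip_cont h L HL). intros u v. unfold h.
    replace (g (Rmax 0 u) - t - (g (Rmax 0 v) - t)) with (g (Rmax 0 u) - g (Rmax 0 v)) by ring.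
    eapply Rle_trans. apply (gamma_abs L); [exact Hr|apply Rmax_l|apply Rmax_l].
    apply Rmult_le_compat_l; [lra|apply Rmax0_lip]. }
  destruct (IVT_cor h a b Hc Hab) as [s [Hs Hs0]].
  { unfold h. rewrite !Rmax_right by lra. nra. }
  exists s. split; auto. unfold h in Hs0. rewrite Rmax_right in Hs0 by lra. lra.
Qed.

Definition Kset (X : Type) (d : X -> X -> R) (f : R -> X -> X) (p q : X)
  (delta T0 : R) (n : nat) (w : X) : Prop :=
  d w q <= delta /\ forall t, T0 <= t -> t <= INR n ->
    forall c a, (forall s, 0 <= s -> a <= d (f s p) c) -> a - delta <= d (f t w) c.

Lemma K_nonempty (X : Type) (d : X -> X -> R) (f : R -> X -> X) (p q : X) delta M :
  is_metric X d -> is_semiflow X d f -> 0 < delta -> 0 < M ->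
  (forall (k : nat) (C : nat -> X * R), (1 <= k)%nat -> orbit_seq k C ->
      exists g : nat -> R, gap_for k g /\ (forall j, (S j < k)%nat -> g j <= M) /\
      exists gamma, reparam M gamma /\ exists z, shadowed X d f k C g gamma delta z) ->
  forall n, exists w, Kset X d f p q delta (M * M + 1) n w.
Proof.
  intros [Hpos [Hid [Hsym Htri]]] [Hf0 [Hfc _]] Hd HM Hglue n.
  set (m := M * (INR n + 1)).
  assert (Hm : 0 < m) by (unfold m; pose proof (pos_INR n); nra).
  set (C := fun j : nat => match j with O => (q, 0) | _ => (p, m) end).
  destruct (Hglue 2%nat C) as [g [Hg [HgM [gamma [Hr [z Hsh]]]]]].
  { auto. }
  { intros j _. destruct j; simpl; lra. }
  exists z. split.
  - pose proof (Hsh 0%nat ltac:(auto) 0 ltac:(simpl; lra)) as H0.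
    simpl in H0. rewrite Rplus_0_r in H0. destruct Hr as [_ [Hg0 _]].
    rewrite Hg0, !Hf0 in H0. lra.
  - intros t Ht1 Ht2 c a Hca.
    pose proof (Hg 0%nat ltac:(auto)) as Hg0p. pose proof (HgM 0%nat ltac:(auto)) as Hg0M.
    set (g0 := g 0%nat) in *.
    assert (Hgam0 : gamma 0 = 0) by (destruct Hr as [_ [H _]]; exact H).
    assert (Ha : gamma g0 <= M * M + 1).
    { destruct (Req_dec g0 0) as [E|E].
      - rewrite E, Hgam0. nra.
      - destruct (gamma_lip M gamma g0 0 Hr ltac:(lra) ltac:(lra)). nra. }
    assert (Hb : INR n + 1 <= gamma (g0 + m)).
    { destruct (gamma_lip M gamma (g0 + m) 0 Hr ltac:(lra) ltac:(lra)) as [_ H].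
      assert (m / M <= (g0 + m - 0) / M).
      { unfold Rdiv. apply Rmult_le_compat_r. left; apply Rinv_0_lt_compat; lra. lra. }
      assert (m / M = INR n + 1) by (unfold m; field; lra). lra. }
    destruct (gamma_inv M gamma g0 (g0 + m) t Hr Hg0p ltac:(lra) ltac:(lra)) as [s0 [Hs0 Es0]].
    pose proof (Hsh 1%nat ltac:(auto) (s0 - g0) ltac:(simpl; lra)) as H1.
    simpl in H1. replace (0 + 0 + g 0%nat + (s0 - g0)) with s0 in H1 by (unfold g0; ring).
    rewrite Es0 in H1.
    pose proof (Hca (s0 - g0) ltac:(lra)) as Hc.
    pose proof (Htri (f (s0 - g0) p) (f t z) c). rewrite Hsym in H1. lra.
Qed.

Lemma K_open (X : Type) (d : X -> X -> R) (f : R -> X -> X) (p q : X) delta T0 n :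
  is_metric X d -> is_semiflow X d f -> 0 <= T0 ->
  is_open X d (fun w => ~ Kset X d f p q delta T0 n w).
Proof.
  intros [Hpos [Hid [Hsym Htri]]] [Hf0 [Hfc Hcont]] HT0 w Hw.
  unfold Kset in Hw. apply not_and_or in Hw. destruct Hw as [Hw|Hw].
  - exists (d w q - delta). split; [lra|]. intros y Hy [Hy1 _].
    pose proof (Htri w y q). lra.
  - apply not_all_ex_not in Hw. destruct Hw as [t Hw].
    apply imply_to_and in Hw. destruct Hw as [Ht1 Hw].
    apply imply_to_and in Hw. destruct Hw as [Ht2 Hw].
    apply not_all_ex_not in Hw. destruct Hw as [c Hw].
    apply not_all_ex_not in Hw. destruct Hw as [a Hw].
    apply imply_to_and in Hw. destruct Hw as [Hca Hw].
    apply Rnot_le_lt in Hw.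
    destruct (Hcont t w ltac:(lra) (a - delta - d (f t w) c) ltac:(lra)) as [r [Hr Hr2]].
    exists r. split; auto. intros y Hy [_ HK].
    pose proof (HK t Ht1 Ht2 c a Hca).
    assert (d (f t y) (f t w) < a - delta - d (f t w) c).
    { apply Hr2; auto; try lra. replace (t - t) with 0 by ring. rewrite Rabs_R0; lra. }
    pose proof (Htri (f t y) (f t w) c). lra.
Qed.

Lemma K_mono (X : Type) (d : X -> X -> R) (f : R -> X -> X) (p q : X) delta T0 n N w :
  (n <= N)%nat -> Kset X d f p q delta T0 N w -> Kset X d f p q delta T0 n w.
Proof.
  intros H [H1 H2]. split; auto. intros t Ht1 Ht2. apply H2; auto.
  apply le_INR in H. lra.
Qed.

Lemma maxl_in (l : list nat) i : In i l -> (i <= fold_right max 0 l)%nat.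
Proof.
  induction l; simpl; [tauto|]. intros [E|E]; [subst; apply Nat.le_max_l|].
  eapply Nat.le_trans; [apply IHl; auto| apply Nat.le_max_r].
Qed.

Lemma K_all (X : Type) (d : X -> X -> R) (f : R -> X -> X) (p q : X) delta T0 :
  is_metric X d -> compact_space X d -> is_semiflow X d f -> 0 <= T0 ->
  (forall n, exists w, Kset X d f p q delta T0 n w) ->
  exists z, forall n, Kset X d f p q delta T0 n z.
Proof.
  intros Hm Hc Hs HT0 Hne. apply NNPP. intro H.
  destruct (Hc nat (fun n w => ~ Kset X d f p q delta T0 n w)) as [l Hl].
  - intro i. apply K_open; auto.
  - intro x. apply not_all_not_ex. intro H2. apply H. exists x. intro n.
    apply NNPP. apply H2.
  - destruct (Hne (fold_right max 0 l)%nat) as [w Hw].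
    destruct (Hl w) as [i [Hi Hi2]]. apply Hi2.
    eapply K_mono; [apply maxl_in; exact Hi| exact Hw].
Qed.

Theorem lemma3p2 (X : Type) (d : X -> X -> R) (f : R -> X -> X) :
  is_metric X d -> compact_space X d -> is_semiflow X d f ->
  weak_reparam_gluing X d f -> ~ minimal X d f ->
  exists (x y : X) (eps T : R), 0 < eps /\ 0 < T /\
    (forall t, T <= t -> eps <= d (f t x) x) /\
    (forall t, T <= t -> eps <= d (f t y) x) /\
    (forall t, T <= t -> eps <= d (f t y) y) /\
    (forall t, 0 <= t -> eps <= d (f t x) y).
Proof.
  intros Hmet Hcomp Hsf Hgl Hnm.
  assert (exists p q e0, 0 < e0 /\ forall t, 0 <= t -> e0 <= d (f t p) q) as [p [q [e0 [He0 Hpq]]]].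
  { apply NNPP. intro H. apply Hnm. intros x y eps Heps. apply NNPP. intro H2.
    apply H. exists x, y, eps. split; auto. intros t Ht.
    apply Rnot_lt_le. intro H3. apply H2. exists t. auto. }
  pose proof Hmet as [Hpos [Hid [Hsym Htri]]].
  pose proof Hsf as [Hf0 [Hfc Hcont]].
  set (delta := e0 / 8). set (rho := e0 / 4).
  destruct (Hgl delta ltac:(unfold delta; lra)) as [M [HM Hglue]].
  set (T0 := M * M + 1).
  assert (HT0 : 0 < T0) by (unfold T0; nra).
  destruct (K_all X d f p q delta T0 Hmet Hcomp Hsf ltac:(lra)
     (K_nonempty X d f p q delta M Hmet Hsf ltac:(unfold delta; lra) HM Hglue)) as [z Hz].
  assert (Hz0 : d z q <= delta) by (destruct (Hz 0%nat); auto).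
  assert (Htail : forall t, T0 <= t -> forall c a, (forall s, 0 <= s -> a <= d (f s p) c) ->
            a - delta <= d (f t z) c).
  { intros t Ht c a Hca. destruct (INR_unbounded t) as [n Hn].
    destruct (Hz n) as [_ H]. apply H; auto; lra. }
  assert (Htq : forall t, T0 <= t -> e0 - delta <= d (f t z) q).
  { intros t Ht. apply Htail; auto. }
  set (E := fun t => 0 <= t /\ d (f t z) q <= rho).
  destruct (completeness E) as [sg [Hub Hlub]].
  { exists T0. intros t [Ht1 Ht2]. apply Rnot_lt_le. intro H.
    pose proof (Htq t ltac:(lra)). unfold delta, rho in *. lra. }
  { exists 0. split; [lra|]. rewrite Hf0. unfold delta, rho in *. lra. }
  assert (Hsg0 : 0 <= sg) by (apply Hub; split; [lra|]; rewrite Hf0; unfold delta, rho in *; lra).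
  assert (HA : forall t, sg < t -> rho < d (f t z) q).
  { intros t Ht. apply Rnot_le_lt. intro H. assert (E t) by (split; auto; lra).
    pose proof (Hub t H0). lra. }
  assert (HB : d (f sg z) q <= rho).
  { apply Rnot_lt_le. intro H.
    destruct (Hcont sg z Hsg0 (d (f sg z) q - rho) ltac:(lra)) as [eta [Heta Heta2]].
    assert (exists t, E t /\ sg - eta < t) as [t [Et Ht]].
    { apply NNPP. intro H2. assert (is_upper_bound E (sg - eta)).
      { intros t Et. apply Rnot_lt_le. intro H3. apply H2. exists t. auto. }
      pose proof (Hlub _ H0). lra. }
    pose proof (Hub t Et). destruct Et as [Et1 Et2].
    assert (H3 : d (f t z) (f sg z) < d (f sg z) q - rho).
    { apply Heta2; auto. rewrite Rabs_left1; lra. rewrite (proj2 (Hid z z) eq_refl); lra. }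
    pose proof (Htri (f sg z) (f t z) q) as H4. rewrite (Hsym (f sg z) (f t z)) in H4. lra. }
  assert (HC : rho <= d (f sg z) q).
  { apply Rnot_lt_le. intro H.
    destruct (Hcont sg z Hsg0 (rho - d (f sg z) q) ltac:(lra)) as [eta [Heta Heta2]].
    assert (d (f (sg + eta/2) z) (f sg z) < rho - d (f sg z) q).
    { apply Heta2; try lra. replace (sg + eta / 2 - sg) with (eta/2) by ring.
      rewrite Rabs_right; lra. rewrite (proj2 (Hid z z) eq_refl); lra. }
    pose proof (HA (sg + eta/2) ltac:(lra)).
    pose proof (Htri (f (sg + eta/2) z) (f sg z) q). lra. }
  set (x := f sg z).
  assert (Hxp : forall s, 0 <= s -> e0 - rho <= d (f s p) x).
  { intros s Hs. pose proof (Hpq s Hs). pose proof (Htri (f s p) x q). unfold x in *. lra. }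
  assert (Hzp : forall s, 0 <= s -> e0 - delta <= d (f s p) z).
  { intros s Hs. pose proof (Hpq s Hs). pose proof (Htri (f s p) z q). lra. }
  exists x, z, (e0 / 8), T0. split; [lra|]. split; [lra|]. split; [|split; [|split]].
  - intros t Ht. unfold x at 1. rewrite <- Hfc by lra.
    pose proof (Htail (t + sg) ltac:(lra) x (e0 - rho) Hxp). unfold rho, delta in *. lra.
  - intros t Ht. pose proof (Htail t Ht x (e0 - rho) Hxp). unfold rho, delta in *. lra.
  - intros t Ht. pose proof (Htail t Ht z (e0 - delta) Hzp). unfold rho, delta in *. lra.
  - intros t Ht. unfold x. rewrite <- Hfc by lra.
    assert (rho <= d (f (t + sg) z) q).
    { destruct Ht as [Ht|E0].
      - left. apply HA. lra.
      - subst t. rewrite Rplus_0_l. auto. }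
    pose proof (Htri (f (t + sg) z) z q) as H1.
    unfold rho, delta in *. lra.
Qed.
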